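(* Let $R$ be a ring with identity and involution $*$, and let $a,b\in R$ be core invertible with core inverses $a^{\oplus}$ and $b^{\oplus}$. If $ab=0=ba$ and $a^*b=0$, then $a+b$ is core invertible and $(a+b)^{\oplus}=a^{\oplus}+b^{\oplus}$.
   Context: An involution on $R$ satisfies $(a^* )^*=a$, $(ab)^*=b^*a^*$, $(a+b)^*=a^*+b^*$. An element $x\in R$ is a core inverse of $a$ if $axa=a$, $xR=aR$ and $Rx=Ra^*$; it is unique when it exists and is denoted $a^{\oplus}$. *)

(* Defs.v *)
From mathcomp Require Import all_boot all_algebra.
Set Implicit Arguments. Unset Strict Implicit. Unset Printing Implicit Defensive.
Import GRing.Theory.
Local Open Scope ring_scope.

Definition involution (R : pzRingType) (star : R -> R) : Prop :=
  (forall a, star (star a) = a) /\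
  (forall a b, star (a * b) = star b * star a) /\
  (forall a b, star (a + b) = star a + star b).

Definition rideal (R : pzRingType) (x : R) : R -> Prop := fun y => exists r, y = x * r.
Definition lideal (R : pzRingType) (x : R) : R -> Prop := fun y => exists r, y = r * x.

Definition is_core_inverse (R : pzRingType) (star : R -> R) (a x : R) : Prop :=
  a * x * a = a /\
  (forall y, rideal x y <-> rideal a y) /\
  (forall y, lideal x y <-> lideal (star a) y).

Definition core_invertible (R : pzRingType) (star : R -> R) (a : R) : Prop :=
  exists x, is_core_inverse star a x.

(* Main.v *)
Require Import Defs.
From mathcomp Require Import all_boot all_algebra.
Local Open Scope ring_scope.
Import GRing.Theory.

Lemma star0 (R : pzRingType) (star : R -> R) : involution star -> star 0 = 0.
Proof.
move=> [_ [_ hD]]. have := hD 0 0; rewrite addr0 => h.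
have h' : star 0 + star 0 = star 0 + 0 by rewrite addr0 -h.
exact: (addrI _ h').
Qed.

Lemma core_facts (R : pzRingType) (star : R -> R) (a x : R) :
  involution star -> is_core_inverse star a x ->
  [/\ a*x*a = a, a*(x*x) = x, x*a*x = x, x*(a*a) = a &
      [/\ x = x*star x*star a, star a = star a * a * x & exists r, x = a*r]].
Proof.
move=> [hI [hM hD]] [h1 [h2 h3]].
have [r1 e1] : rideal a x by apply/h2; exists 1; rewrite mulr1.
have [r2 e2] : rideal x a by apply/h2; exists 1; rewrite mulr1.
have [s1 e3] : lideal (star a) x by apply/h3; exists 1; rewrite mul1r.
have [s2 e4] : lideal x (star a) by apply/h3; exists 1; rewrite mul1r.
have eaxx : a*(x*x) = x by rewrite {2}e1 !mulrA h1 -e1.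
have sa : star a = star a * star x * star a.
  by rewrite -{1}h1 hM hM mulrA.
have ex : x = x*star x*star a by rewrite {1}e3 {1}sa !mulrA -e3.
have herm : star (a*x) = a*x.
  have e : a*x = a*x*star (a*x) by rewrite {1}ex hM !mulrA.
  by rewrite e hM hI.
have exax : x*a*x = x by rewrite -mulrA -herm hM mulrA -ex.
have exaa : x*(a*a) = a by rewrite {2}e2 !mulrA exax -e2.
have e6 : star a = star a * a * x by rewrite {1}e4 -{1}exax !mulrA -e4.
by split => //; split => //; exists r1.
Qed.

Theorem corollary4p7 (R : pzRingType) (star : R -> R) (a b ca cb : R) :
  involution star ->
  is_core_inverse star a ca -> is_core_inverse star b cb ->
  a * b = 0 -> b * a = 0 -> star a * b = 0 ->
  core_invertible star (a + b) /\ is_core_inverse star (a + b) (ca + cb).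
Proof.
move=> hinv ha hb ab ba sab.
have s0 := @star0 _ _ hinv.
have [hI [hM hD]] := hinv.
have [a1 a2 a3 a4 [a5 a6 [r ar]]] := @core_facts _ _ _ _ hinv ha.
have [b1 b2 b3 b4 [b5 b6 [q bq]]] := @core_facts _ _ _ _ hinv hb.
have sba : star b * a = 0 by rewrite -(hI (star b * a)) hM hI sab s0.
have xb : ca * b = 0 by rewrite a5 -mulrA sab mulr0.
have ya : cb * a = 0 by rewrite b5 -mulrA sba mulr0.
have ay : a * cb = 0 by rewrite bq mulrA ab mul0r.
have bx : b * ca = 0 by rewrite ar mulrA ba mul0r.
have xy : ca * cb = 0 by rewrite bq mulrA xb mul0r.
have yx : cb * ca = 0 by rewrite ar mulrA ya mul0r.
have E1 : (a+b)*(ca+cb)*(a+b) = a+b.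
  rewrite !(mulrDl, mulrDr) ay bx ?mulr0 ?mul0r !(addr0, add0r).
  by rewrite -!mulrA xb ya !mulr0 addr0 add0r !mulrA a1 b1.
have E2 : (ca+cb)*((a+b)*(a+b)) = a+b.
  have sq : (a+b)*(a+b) = a*a+b*b by rewrite mulrDl !mulrDr ab ba addr0 add0r.
  by rewrite sq mulrDl !mulrDr a4 b4 !mulrA xb ya !mul0r addr0 add0r.
have E3 : (a+b)*((ca+cb)*(ca+cb)) = ca+cb.
  have sq : (ca+cb)*(ca+cb) = ca*ca+cb*cb by rewrite mulrDl !mulrDr xy yx addr0 add0r.
  by rewrite sq mulrDl !mulrDr a2 b2 !mulrA ay bx !mul0r addr0 add0r.
have E4 : ca+cb = (ca*star ca + cb*star cb) * star (a+b).
  rewrite hD mulrDl !mulrDr -!mulrA -(hM b ca) -(hM a cb) ay bx s0 !mulr0 addr0 add0r.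
  by rewrite !mulrA -a5 -b5.
have E5 : star (a+b) = (star a * a + star b * b) * (ca+cb).
  rewrite hD mulrDr !mulrDl -!mulrA ay bx !mulr0 addr0 add0r.
  by rewrite !mulrA -a6 -b6.
suff H : is_core_inverse star (a + b) (ca + cb) by split => //; exists (ca+cb).
split => //; split => y; split.
- by move=> [t ->]; exists ((ca+cb)*(ca+cb)*t); rewrite -{1}E3 !mulrA.
- by move=> [t ->]; exists ((a+b)*(a+b)*t); rewrite -{1}E2 !mulrA.
- by move=> [t ->]; exists (t*(ca*star ca + cb*star cb)); rewrite -mulrA -E4.
- by move=> [t ->]; exists (t*(star a * a + star b * b)); rewrite -mulrA -E5.
Qed.
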